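(* Let $\Delta$ be a compact Hausdorff space, $u\colon\Delta\to\mathbb R$ continuous, $v\colon\Delta\to\mathbb R$ upper semicontinuous, $f(\alpha)=\max\{v(\bm w):u(\bm w)=\alpha\}$ (with $\max\varnothing=-\infty$) and $\tau(q)=\min_{\bm w\in\Delta}\{q\,u(\bm w)-v(\bm w)\}$. Then the limits $\partial^-\tau(\infty)=\lim_{q\to\infty}\tau(q)/q$ and $\partial^+\tau(-\infty)=\lim_{q\to-\infty}\tau(q)/q$ exist and are finite, and $\tau$ is supported at $(\infty,\partial^-\tau(\infty))$ and at $(-\infty,\partial^+\tau(-\infty))$. In particular $\tau^*(\partial^-\tau(\infty))=f(\partial^-\tau(\infty))$ and $\tau^*(\partial^+\tau(-\infty))=f(\partial^+\tau(-\infty))$.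
   Context: Concave conjugate: $\tau^*(\alpha)=\inf_{q\in\mathbb R}(q\alpha-\tau(q))$. $\tau$ is supported at $(\infty,a)$ (with $a=\partial^-\tau(\infty)$) if there is $\bm w\in\Delta$ such that the line $q\mapsto q\,u(\bm w)-v(\bm w)$ is the affine asymptote of $\tau$ as $q\to\infty$, i.e. $\tau(q)-(q\,u(\bm w)-v(\bm w))\to0$ as $q\to\infty$; similarly for $(-\infty,\partial^+\tau(-\infty))$ as $q\to-\infty$. *)

(* Defs.v *)
From HB Require Import structures.
From mathcomp Require Import all_boot all_order all_algebra.
From mathcomp Require Import all_classical all_reals all_analysis.
Set Implicit Arguments. Unset Strict Implicit. Unset Printing Implicit Defensive.
Import Order.TTheory GRing.Theory Num.Theory numFieldNormedType.Exports.
Local Open Scope classical_set_scope.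
Local Open Scope ring_scope.

Section Defs.
Context {T : topologicalType} {R : realType}.

Definition upper_semicontinuous (v : T -> R) :=
  forall x (a : R), v x < a -> exists2 V, nbhs x V & forall y, V y -> v y < a.

(* tau(q) = min_{w in Delta} (q u(w) - v(w)), written as an infimum
   (the minimum is attained under the standing hypotheses). *)
Definition tau (u v : T -> R) (q : R) : R :=
  inf [set q * u w - v w | w in [set: T]].

Definition fspec (u v : T -> R) (alpha : R) : \bar R :=
  ereal_sup [set (v w)%:E | w in [set w | u w = alpha]].

Definition conj_concave (t : R -> R) (alpha : R) : \bar R :=
  ereal_inf [set (q * alpha - t q)%:E | q in [set: R]].

Definition supported_pinfty (u v : T -> R) (t : R -> R) :=
  exists w : T, (t q - (q * u w - v w)) @[q --> +oo] --> 0.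

Definition supported_ninfty (u v : T -> R) (t : R -> R) :=
  exists w : T, (t q - (q * u w - v w)) @[q --> -oo] --> 0.

End Defs.

(* Main.v *)
Require Import Defs.
From HB Require Import structures.
From mathcomp Require Import all_boot all_order all_algebra.
From mathcomp Require Import all_classical all_reals all_analysis.
From mathcomp Require Import lra.
Import Order.TTheory GRing.Theory Num.Theory numFieldNormedType.Exports.
Local Open Scope classical_set_scope.
Local Open Scope ring_scope.

Section H.
Context {R : realType} {T : topologicalType}.

Lemma cont_usc (u : T -> R) : continuous u -> upper_semicontinuous u.
Proof.
move=> cu x a ua; exists (u @^-1` [set z | z < a]) => //.
apply: cu; apply: open_nbhs_nbhs; split => //; exact: open_lt.
Qed.

Lemma usc_closed (v : T -> R) (c : R) : upper_semicontinuous v ->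
  closed [set x | c <= v x].
Proof.
move=> usc p clp /=; rewrite leNgt; apply/negP => vp.
have [V Vp Vlt] := usc p c vp.
have [z [/= cz Vz]] := clp V Vp.
by have := Vlt z Vz; rewrite ltNge cz.
Qed.

Lemma usc_max (A : set T) (v : T -> R) : compact A -> A !=set0 ->
  upper_semicontinuous v -> exists2 w, A w & forall y, A y -> v y <= v w.
Proof.
move=> cA [a0 Aa0] usc.
apply: contrapT => Hn.
have H : forall w, A w -> exists2 y, A y & v w < v y.
  move=> w Aw; apply: contrapT => nH; apply: Hn; exists w => // y Ay.
  rewrite leNgt; apply/negP => lt; apply: nH; by exists y.
pose B w := [set y | A y /\ v w < v y].
have FF : Filter (filter_from A B).
  apply: filter_from_filter; first by exists a0.
  move=> i j Ai Aj; case: (leP (v i) (v j)) => hij.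
    exists j => // y [Ay vy]; split; split => //; exact: le_lt_trans vy.
  exists i => // y [Ay vy]; split; split => //; exact: lt_trans vy.
have PF : ProperFilter (filter_from A B).
  apply: filter_from_proper => i Ai; have [y Ay vy] := H i Ai; by exists y.
have FA : filter_from A B A by exists a0 => // y [].
have [p [Ap clp]] := cA _ PF FA.
have [y Ay vy] := H p Ap.
have [V Vp Vlt] := usc p (v y) vy.
have [z [[Az vz] Vz]] := clp (B y) V (in_filter_from _ Ay) Vp.
by have := Vlt z Vz; rewrite ltNge (ltW vz).
Qed.


Arguments usc_max {A v}.
Arguments usc_closed {v c}.
Arguments cont_usc {u}.

Lemma contN {u : T -> R} : continuous u -> continuous (fun x => - u x).
Proof. by move=> cu x; apply: cvgN; exact: cu. Qed.

Lemma plus_case (cT : compact [set: T]) (w0 : T)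
  (u v : T -> R) (cu : continuous u) (usc_v : upper_semicontinuous v) :
  exists a : R,
    [/\ (tau u v q / q) @[q --> +oo] --> a,
        supported_pinfty u v (tau u v) &
        conj_concave (tau u v) a = fspec u v a].
Proof.
have ne : [set: T] !=set0 by exists w0.
have [wm _ hm'] := usc_max cT ne (cont_usc (contN cu)).
set m := u wm.
have hm : forall y, m <= u y by move=> y; have := hm' y I; rewrite lerN2.
have [wM _ hM'] := usc_max cT ne (cont_usc cu).
have hM : forall y, u y <= u wM by move=> y; exact: hM' y I.
have [wv _ hv'] := usc_max cT ne usc_v.
have hv : forall y, v y <= v wv by move=> y; exact: hv' y I.
set Vmax := v wv.
pose K := [set x | - m <= - u x].
have cK : compact K.
  apply: subclosed_compact cT _ => //; exact: usc_closed (cont_usc (contN cu)).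
have [ws Kws hs] := usc_max cK (ex_intro _ wm (lexx _)) usc_v.
have uws : u ws = m by apply/eqP; rewrite eq_le hm andbT -lerN2.
set Vs := v ws.
have tau_le : forall q w, tau u v q <= q * u w - v w.
  move=> q w; apply: ge_inf; last by exists w.
  exists (Num.min (q * m) (q * u wM) - Vmax) => _ [w' _ <-].
  apply: lerB; last exact: hv.
  case: (leP 0 q) => q0.
    by rewrite ge_min; apply/orP; left; apply: ler_wpM2l => //; exact: hm.
  by rewrite ge_min; apply/orP; right; apply: ler_wnM2l; [exact: ltW|exact: hM].
have tau_ge : forall q c, (forall w, c <= q * u w - v w) -> c <= tau u v q.
  move=> q c H; apply: lb_le_inf; first by exists (q * u w0 - v w0), w0.
  by move=> _ [w _ <-].
have up : forall q, tau u v q <= q * m - Vs by move=> q; rewrite -uws; exact: tau_le.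
have low : forall e, 0 < e -> \forall q \near +oo, q * m - Vs - e <= tau u v q.
  move=> e e0.
  have easy : forall q w, 0 <= q -> v w < Vs + e -> q * m - Vs - e <= q * u w - v w.
    move=> q w q0 vw; have : q * m <= q * u w by apply: ler_wpM2l => //; exact: hm.
    lra.
  have [[s Ss]|nS] := pselect (exists s, Vs + e <= v s); last first.
    apply: filterS (nbhs_pinfty_ge (num_real 0)) => q q0; apply: tau_ge => w.
    apply: easy => //; rewrite ltNge; apply/negP => h; apply: nS; by exists w.
  pose S := [set x | Vs + e <= v x].
  have cS : compact S by apply: subclosed_compact cT _ => //; exact: usc_closed.
  have [s0 Ss0 hs0'] := usc_max cS (ex_intro _ s Ss) (cont_usc (contN cu)).
  have hs0 : forall y, S y -> u s0 <= u y by move=> y Sy; have := hs0' y Sy; rewrite lerN2.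
  set d := u s0 - m.
  have d0 : 0 < d.
    rewrite /d subr_gt0 lt_neqAle hm andbT; apply/negP => /eqP ms0.
    have : K s0 by rewrite /K /= ms0.
    move=> /hs; rewrite -/Vs => h; move: Ss0; rewrite /S /=; lra.
  apply: filterS2 (nbhs_pinfty_ge (num_real 0)) (nbhs_pinfty_ge (num_real ((Vmax - Vs) / d))).
  move=> q q0 qd; apply: tau_ge => w.
  have [vw|vw] := ltP (v w) (Vs + e); first exact: easy.
  have := hs0 w vw; rewrite -/d => uw.
  have h1 : q * m + q * d <= q * u w.
    by rewrite -mulrDr; apply: ler_wpM2l => //; move: uw; rewrite /d; lra.
  have h2 : Vmax - Vs <= q * d by rewrite -ler_pdivrMr.
  have h3 : v w <= Vmax by exact: hv.
  clearbody d Vmax Vs; lra.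
exists m; split.
- apply/cvgrPdist_le => eps eps0.
  apply: filterS3 (low 1 ltr01) (nbhs_pinfty_ge (num_real 1))
    (nbhs_pinfty_ge (num_real ((1 + `|Vs|) / eps))) => q lq q1 qe.
  have q0 : 0 < q by apply: lt_le_trans q1.
  have -> : m - tau u v q / q = (q * m - tau u v q) / q.
    by rewrite mulrBl mulrAC divff ?gt_eqF // mul1r.
  rewrite normrM (gtr0_norm (x := q^-1)) ?invr_gt0 // ler_pdivrMr //.
  have h1 : 1 + `|Vs| <= eps * q by rewrite mulrC -ler_pdivrMr.
  have h2 := up q.
  have := lexx `|Vs|; rewrite ler_norml => /andP[h3 h4].
  rewrite ler_norml; apply/andP; split; clearbody Vs; lra.
- exists ws; rewrite uws; apply/cvgrPdist_le => eps eps0.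
  apply: filterS (low eps eps0) => q lq.
  rewrite sub0r normrN ler_norml -/Vs; have := up q; clearbody Vs; move=> h; apply/andP; split; lra.
- have fs : fspec u v m = Vs%:E.
    apply/eqP; rewrite eq_le; apply/andP; split.
      by apply: ge_ereal_sup => _ [w uw <-]; rewrite lee_fin; apply: hs; rewrite /K /= uw.
    by apply: ereal_sup_ubound; exists ws.
  rewrite fs; apply/eqP; rewrite eq_le; apply/andP; split.
    apply/lee_addgt0Pr => e e0.
    have [q lq] := filter_ex (low e e0).
    apply: le_trans (ereal_inf_lbound _) _; first by exists q.
    rewrite lee_fin; lra.
  by apply: le_ereal_inf_tmp => _ [q _ <-]; rewrite lee_fin; have := up q; lra.
Qed.

Lemma tauN (u v : T -> R) q : tau (fun w => - u w) v q = tau u v (- q).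
Proof.
rewrite /tau; congr inf; congr image; apply: funext => w; by rewrite mulrN mulNr.
Qed.

Lemma fspecN (u v : T -> R) b : fspec (fun w => - u w) v b = fspec u v (- b).
Proof.
rewrite /fspec; congr ereal_sup; congr image; apply: funext => w /=.
by apply/propext; split => h; [rewrite -h opprK | rewrite h opprK].
Qed.

Lemma conjN (u v : T -> R) b :
  conj_concave (tau (fun w => - u w) v) b = conj_concave (tau u v) (- b).
Proof.
rewrite /conj_concave; congr ereal_inf; apply/seteqP; split => _ [q _ <-].
  by exists (- q) => //; rewrite tauN mulrNN.
by exists (- q) => //; rewrite tauN (opprK q) mulNr mulrN.
Qed.

End H.

Theorem mainTheorem10 (R : realType) (T : topologicalType)
  (hT : hausdorff_space T) (cT : compact [set: T]) (w0 : T)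
  (u v : T -> R) (cu : continuous u) (usc_v : upper_semicontinuous v) :
  exists a b : R,
    [/\ (tau u v q / q) @[q --> +oo] --> a,
        (tau u v q / q) @[q --> -oo] --> b,
        supported_pinfty u v (tau u v) /\ supported_ninfty u v (tau u v),
        conj_concave (tau u v) a = fspec u v a &
        conj_concave (tau u v) b = fspec u v b].
Proof.
have [a [ha sa ca]] := plus_case cT w0 _ _ cu usc_v.
have [b [hb [w hw] cb]] := plus_case cT w0 _ _ (contN cu) usc_v.
exists a, (- b); split => //.
- apply/cvgNy_compNP.
  have -> : ((fun q => tau u v q / q) \o -%R) = (fun q => - (tau (fun w => - u w) v q / q)).
    by apply: funext => q /=; rewrite tauN invrN mulrN.
  exact: cvgN.
- split => //; exists w; apply/cvgNy_compNP.
  have -> : ((fun q => tau u v q - (q * u w - v w)) \o -%R) =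
      (fun q => tau (fun w => - u w) v q - (q * - u w - v w)).
    by apply: funext => q /=; rewrite tauN mulrN mulNr.
  exact: hw.
- by rewrite -conjN -fspecN.
Qed.
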